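(* Let $k\ge3$ and let $\{H_{r_1},\dots,H_{r_k}\}$ be a set of pairwise ultra-parallel hyperplanes in $\mathbb{H}^n$ having a common perpendicular $\varrho$ (a geodesic line meeting each $H_{r_i}$ orthogonally). If the group $D\subseteq\mathrm{Iso}(\mathbb{H}^n)$ generated by the reflections $r_i$ across $H_{r_i}$ is a discrete subgroup, then $D$ is isomorphic to the infinite dihedral group $D_\infty$.
   Context: Two disjoint hyperplanes in $\mathbb{H}^n$ are ultra-parallel if they have no common point in the visual boundary $\partial\mathbb{H}^n$. *)

(* Defs.v *)
From HB Require Import structures.
From mathcomp Require Import all_boot all_order all_algebra.
From mathcomp Require Import all_classical all_reals all_analysis.
Set Implicit Arguments. Unset Strict Implicit. Unset Printing Implicit Defensive.
Import Order.TTheory GRing.Theory Num.Theory.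
Local Open Scope ring_scope.

(* Hyperboloid model of H^n inside Minkowski space R^{n,1} = column vectors
   of size n.+1; coordinate 0 is the timelike one. *)
Section Hyp.
Variables (R : realType) (n : nat).
Notation vec := 'cV[R]_(n.+1).
Notation mat := 'M[R]_(n.+1).

Definition mink (x y : vec) : R :=
  \sum_(i < n.+1) (if i == ord0 then -1 else 1) * x i 0 * y i 0.

Definition inH (x : vec) : Prop := mink x x = -1 /\ 0 < x ord0 0.

(* the hyperplane of H^n with spacelike normal e (mink e e > 0) *)
Definition hyperplane (e : vec) : set vec := fun x => inH x /\ mink x e = 0.

(* the reflection of H^n across hyperplane e, as an element of O^+(n,1):
   x |-> x - 2 <x,e>/<e,e> e *)
Definition refl (e : vec) : mat :=
  \matrix_(i, j) ((i == j)%:R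
     - 2 * e i 0 * ((if j == ord0 then -1 else 1) * e j 0) / mink e e).

(* Visual boundary: points of the boundary are future null rays; such a ray
   u lies in the boundary of hyperplane e iff <u,e> = 0.  Ultra-parallel:
   disjoint and no common boundary point. *)
Definition ultra_parallel (e1 e2 : vec) : Prop :=
  (forall x, ~ (hyperplane e1 x /\ hyperplane e2 x)) /\
  ~ (exists u : vec, u != 0 /\ mink u u = 0 /\ 0 < u ord0 0 /\
                     mink u e1 = 0 /\ mink u e2 = 0).

Definition hcosh (t : R) : R := (expR t + expR (- t)) / 2.
Definition hsinh (t : R) : R := (expR t - expR (- t)) / 2.

Definition geodesic_data (p v : vec) : Prop :=
  inH p /\ mink v v = 1 /\ mink p v = 0.
Definition geod (p v : vec) (t : R) : vec := hcosh t *: p + hsinh t *: v.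
Definition geod_vel (p v : vec) (t : R) : vec := hsinh t *: p + hcosh t *: v.

(* the geodesic meets hyperplane e orthogonally: at some intersection point,
   its velocity is orthogonal to the tangent space of the hyperplane *)
Definition meets_orthogonally (p v e : vec) : Prop :=
  exists t : R, hyperplane e (geod p v t) /\
    forall w : vec, mink w (geod p v t) = 0 -> mink w e = 0 ->
      mink w (geod_vel p v t) = 0.

Inductive generated (S : set mat) : mat -> Prop :=
  | gen_one : generated S 1%:M
  | gen_in g : S g -> generated S g
  | gen_mul g h : generated S g -> generated S h -> generated S (g *m h)
  | gen_inv g : generated S g -> generated S (invmx g).

(* discrete subgroup (topology of Iso(H^n) = subspace topology of matrices) *)
Definition discrete_set (D : set mat) : Prop :=
  forall g, D g -> exists2 eps : R, 0 < eps &
    forall h, D h -> (forall i j, `|h i j - g i j| < eps) -> h = g.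
End Hyp.

(* The infinite dihedral group D_oo = Z >| Z/2, elements (m, s) standing for
   x |-> (-1)^s x + m on Z. *)
Definition dinf_mul (x y : int * bool) : int * bool :=
  ((x.1 + (if x.2 then - y.1 else y.1))%R, x.2 (+) y.2).

Definition iso_to_Dinf (R : realType) (n : nat) (D : set 'M[R]_(n.+1)) : Prop :=
  exists phi : int * bool -> 'M[R]_(n.+1),
    injective phi /\ (forall g, D g <-> exists x, phi x = g) /\
    (forall x y, phi (dinf_mul x y) = phi x *m phi y).

(* Main.v *)
Require Import Defs.
From HB Require Import structures.
From mathcomp Require Import all_boot all_order all_algebra.
From mathcomp Require Import all_classical all_reals all_analysis.
From mathcomp Require Import ring lra.
Import Order.TTheory GRing.Theory Num.Theory.
Local Open Scope ring_scope.

Module Aux.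
Set Implicit Arguments. Unset Strict Implicit.

Section Gen.
Variables (R : realType) (n : nat).
Notation vec := 'cV[R]_(n.+1).

Lemma sum_mink (x y : vec) :
  \sum_(l < n.+1) ((if l == ord0 then -1 else 1) * x l 0 * y l 0) = mink x y.
Proof. by []. Qed.

Lemma minkC (x y : vec) : mink x y = mink y x.
Proof. by rewrite /mink; apply: eq_bigr => i _; ring. Qed.

Lemma minkDl (x y z : vec) : mink (x + y) z = mink x z + mink y z.
Proof. by rewrite /mink -big_split; apply: eq_bigr => i _ /=; rewrite !mxE; ring. Qed.

Lemma minkZl a (x z : vec) : mink (a *: x) z = a * mink x z.
Proof. by rewrite /mink mulr_sumr; apply: eq_bigr => i _ /=; rewrite !mxE; ring. Qed.

Lemma minkNl (x z : vec) : mink (- x) z = - mink x z.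
Proof. by rewrite -scaleN1r minkZl mulN1r. Qed.

Lemma minkBl (x y z : vec) : mink (x - y) z = mink x z - mink y z.
Proof. by rewrite minkDl minkNl. Qed.

Lemma minkDr (x y z : vec) : mink z (x + y) = mink z x + mink z y.
Proof. by rewrite !(minkC z) minkDl. Qed.
Lemma minkZr a (x z : vec) : mink z (a *: x) = a * mink z x.
Proof. by rewrite !(minkC z) minkZl. Qed.
Lemma minkBr (x y z : vec) : mink z (x - y) = mink z x - mink z y.
Proof. by rewrite !(minkC z) minkBl. Qed.

Lemma mink_h0 (h : vec) : h ord0 0 = 0 -> 0 <= mink h h /\ (mink h h = 0 -> h = 0).
Proof.
move=> h0.
have E : mink h h = \sum_(i < n.+1) h i 0 ^+ 2.
  rewrite /mink; apply: eq_bigr => i _; case: eqP => [->|_]; rewrite ?h0; ring.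
rewrite E; split; first by apply: sumr_ge0 => i _; exact: sqr_ge0.
move=> /psumr_eq0P H; apply/matrixP => i j; rewrite !mxE (ord1 j).
have /eqP := H (fun i _ => sqr_ge0 (h i 0)) i isT.
by rewrite sqrf_eq0 => /eqP.
Qed.
End Gen.

Section Hyp.
Variable R : realType.
Lemma expR_neq0' (x : R) : expR x != 0. Proof. by rewrite gt_eqF // expR_gt0. Qed.
Ltac hs := rewrite /hcosh /hsinh ?opprD ?opprK ?oppr0 ?expRD ?expRN ?expR0;
  field; rewrite ?expR_neq0' //.

Lemma chsh (x : R) : hcosh x ^+ 2 - hsinh x ^+ 2 = 1. Proof. hs. Qed.
Lemma chD (x y : R) : hcosh (x + y) = hcosh x * hcosh y + hsinh x * hsinh y. Proof. hs. Qed.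
Lemma shD (x y : R) : hsinh (x + y) = hsinh x * hcosh y + hcosh x * hsinh y. Proof. hs. Qed.
Lemma chN (x : R) : hcosh (- x) = hcosh x. Proof. hs. Qed.
Lemma shN (x : R) : hsinh (- x) = - hsinh x. Proof. hs. Qed.
Lemma ch0 : hcosh (0 : R) = 1. Proof. hs. Qed.
Lemma sh0 : hsinh (0 : R) = 0. Proof. hs. Qed.
Lemma sh_inj (x y : R) : hsinh x = hsinh y -> x = y.
Proof.
have mono a b : a < b -> hsinh a < hsinh b.
  move=> ab; rewrite /hsinh ltr_pM2r ?invr_gt0 //.
  have h1 : expR a < expR b by rewrite ltr_expR.
  have h2 : expR (- b) < expR (- a) by rewrite ltr_expR ltrN2.
  lra.
move=> E; case: (ltgtP x y) => // [/mono|/mono]; rewrite E ltxx //.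
Qed.

Lemma exp_small (y : R) : `|y| <= 1/2 -> `|expR y - 1| <= 2 * `|y|.
Proof.
move=> hy.
have l1 := expR_ge1Dx y; have l2 := expR_ge1Dx (- y).
rewrite expRN in l2.
have E0 := expR_gt0 y.
have l3 : expR y * (1 - y) <= 1.
  have : expR y * (1 + - y) <= expR y * (expR y)^-1 by rewrite ler_wpM2l // ltW.
  by rewrite mulfV ?expR_neq0'.
move: hy l1 l3 E0; set E := expR y.
case: (lerP 0 y) => y0; rewrite ?(ger0_norm y0) ?(ltr0_norm y0) => hy l1 l3 E0;
  rewrite ler_norml; apply/andP; split; nra.
Qed.

Lemma hyp_small (x : R) : `|x| <= 1/2 -> `|1 - hcosh x| <= 2 * `|x| /\ `|hsinh x| <= 2 * `|x|.
Proof.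
move=> hx.
have a := exp_small hx.
have b : `|expR (- x) - 1| <= 2 * `|x| by have := @exp_small (- x); rewrite normrN; apply.
move: a b; rewrite /hcosh /hsinh !ler_norml => /andP [a1 a2] /andP [b1 b2].
split; apply/andP; split; lra.
Qed.
Lemma tri4 (a b P1 P2 Q1 Q2 K : R) : 0 <= K -> `|P1| <= K -> `|P2| <= K -> `|Q1| <= K -> `|Q2| <= K ->
  `|a * P1 * Q1 + b * P1 * Q2 + (- b) * P2 * Q1 + (- a) * P2 * Q2| <= (2 * K ^+ 2 + 1) * (`|a| + `|b|).
Proof.
move=> K0 h1 h2 h3 h4.
have m (x y : R) : `|x| <= K -> `|y| <= K -> `|x * y| <= K ^+ 2.
  by move=> hx hy; rewrite normrM expr2 ler_pM.
have e1 := m _ _ h1 h3; have e2 := m _ _ h1 h4; have e3 := m _ _ h2 h3; have e4 := m _ _ h2 h4.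
rewrite -!mulrA.
move: e1 e2 e3 e4; move: (P1 * Q1) (P1 * Q2) (P2 * Q1) (P2 * Q2) => A B C D e1 e2 e3 e4.
have n1 := ler_normD (a*A + b*B + -b*C) (-a*D).
have n2 := ler_normD (a*A+b*B) (-b*C); have n3 := ler_normD (a*A) (b*B).
rewrite !normrM !normrN in n1 n2 n3.
have := ler_wpM2l (normr_ge0 a) e1; have := ler_wpM2l (normr_ge0 a) e4.
have := ler_wpM2l (normr_ge0 b) e2; have := ler_wpM2l (normr_ge0 b) e3.
have := normr_ge0 a; have := normr_ge0 b; have := sqr_ge0 K.
move=> *; nra.
Qed.
End Hyp.


Section Geo.
Variables (R : realType) (n : nat) (p v : 'cV[R]_(n.+1)).
Hypotheses (hpp : mink p p = -1) (hvv : mink v v = 1) (hpv : mink p v = 0).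
Notation sg j := (if j == ord0 then -1 else 1 : R).
Ltac genif := do 30 (try match goal with
  | |- context [match ?b with true => ?x | false => ?y end] => let s := fresh "s" in set s := (match b with true => x | false => y end); clearbody s
  | |- context [nat_of_bool ?b] => let s := fresh "s" in set s := (nat_of_bool b); clearbody s
  end).

Definition Phi (a b c d : R) : 'M[R]_(n.+1) := \matrix_(i, j)
  (a * p i 0 * (sg j * p j 0) + b * p i 0 * (sg j * v j 0)
   + c * v i 0 * (sg j * p j 0) + d * v i 0 * (sg j * v j 0)).
Definition Mx a b c d := 1%:M + Phi a b c d.

Lemma hvp : mink v p = 0. Proof. by rewrite minkC. Qed.

Lemma PhiPhi a b c d a' b' c' d' : Phi a b c d *m Phi a' b' c' d' =
  Phi (-a*a' + b*c') (-a*b' + b*d') (-c*a' + d*c') (-c*b' + d*d').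
Proof.
apply/matrixP => i j; rewrite !mxE.
under eq_bigr => l _ do rewrite !mxE.
set L1 := a * p i 0 + c * v i 0. set L2 := b * p i 0 + d * v i 0.
set R1 := a' * (sg j * p j 0) + b' * (sg j * v j 0).
set R2 := c' * (sg j * p j 0) + d' * (sg j * v j 0).
rewrite (eq_bigr (fun l => L1 * R1 * (sg l * p l 0 * p l 0) + L1 * R2 * (sg l * p l 0 * v l 0)
   + L2 * R1 * (sg l * v l 0 * p l 0) + L2 * R2 * (sg l * v l 0 * v l 0))); last first.
  by move=> l _; rewrite /L1 /L2 /R1 /R2; ring.
rewrite !big_split /= -!mulr_sumr !sum_mink hpp hvv hpv hvp /L1 /L2 /R1 /R2 /=; genif; ring.
Qed.

Lemma PhiD a b c d a' b' c' d' : Phi a b c d + Phi a' b' c' d' =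
  Phi (a + a') (b + b') (c + c') (d + d').
Proof. by apply/matrixP => i j; rewrite !mxE; genif; ring. Qed.

Lemma mulM a b c d a' b' c' d' : Mx a b c d *m Mx a' b' c' d' =
  Mx (a + a' - a*a' + b*c') (b + b' - a*b' + b*d') (c + c' - c*a' + d*c') (d + d' - c*b' + d*d').
Proof.
rewrite /Mx mulmxDl !mulmxDr !mul1mx !mulmx1 PhiPhi.
apply/matrixP => i j; rewrite !mxE; genif; ring.
Qed.

Lemma M0 : Mx 0 0 0 0 = 1%:M.
Proof. by apply/matrixP => i j; rewrite !mxE; genif; ring. Qed.

Lemma Phi_vec a b c d w : Phi a b c d *m w =
  (a * mink p w + b * mink v w) *: p + (c * mink p w + d * mink v w) *: v.
Proof.
apply/matrixP => i j; rewrite !mxE (ord1 j) /mink.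
under eq_bigr => l _ do rewrite !mxE.
rewrite !mulrDl !mulr_sumr !mulr_suml -!big_split; apply: eq_bigr => l _ /=; genif; ring.
Qed.

Lemma mink_Phi a b c d w y : mink y (Phi a b c d *m w) =
  (a * mink p w + b * mink v w) * mink y p + (c * mink p w + d * mink v w) * mink y v.
Proof. by rewrite Phi_vec minkDr !minkZr. Qed.

Lemma M_inj a b c d a' b' c' d' : Mx a b c d = Mx a' b' c' d' ->
  [/\ a = a', b = b', c = c' & d = d'].
Proof.
rewrite /Mx => /addrI H.
have H1 := congr1 (fun X => mink p (X *m p)) H.
have H2 := congr1 (fun X => mink v (X *m p)) H.
have H3 := congr1 (fun X => mink p (X *m v)) H.
have H4 := congr1 (fun X => mink v (X *m v)) H.
move: H1 H2 H3 H4 => /=; rewrite !mink_Phi hpp hvv hpv hvp => H1 H2 H3 H4.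
split; lra.
Qed.

Definition Tm x := Mx (1 - hcosh x) (hsinh x) (- hsinh x) (hcosh x - 1).
Definition Rf t := Mx (-2 * hsinh t ^+ 2) (-2 * hsinh t * hcosh t)
                      (-2 * hsinh t * hcosh t) (-2 * hcosh t ^+ 2).

Lemma TD x y : Tm x *m Tm y = Tm (x + y).
Proof. rewrite /Tm mulM chD shD; congr Mx; ring. Qed.

Lemma T0 : Tm 0 = 1%:M.
Proof. by rewrite /Tm ch0 sh0 subrr oppr0 M0. Qed.

Lemma Rf_T t : Rf t = Tm (t + t) *m Rf 0.
Proof.
rewrite /Tm /Rf mulM; congr Mx;
  rewrite /hcosh /hsinh ?opprD ?opprK ?oppr0 ?expRD ?expRN ?expR0;
  field; rewrite ?expR_neq0' //.
Qed.

Lemma RT x : Rf 0 *m Tm x = Tm (- x) *m Rf 0.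
Proof. rewrite /Tm /Rf !mulM chN shN ch0 sh0; congr Mx; ring. Qed.

Lemma RR : Rf 0 *m Rf 0 = 1%:M.
Proof. rewrite /Rf mulM ch0 sh0 -M0; congr Mx; ring. Qed.

Lemma T_inj x y : Tm x = Tm y -> x = y.
Proof. by case/M_inj => _ /sh_inj. Qed.

Lemma R0_notT w : Rf 0 <> Tm w.
Proof. rewrite /Rf /Tm ch0 sh0 => /M_inj [h1 _ _ h4]; lra. Qed.

Lemma key_refl (e : 'cV[R]_(n.+1)) t : 0 < mink e e -> mink (geod p v t) e = 0 ->
  (forall w, mink w (geod p v t) = 0 -> mink w e = 0 -> mink w (geod_vel p v t) = 0) ->
  refl e = Rf t.
Proof.
set g := geod p v t; set u := geod_vel p v t.
move=> hee hge horth.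
have hc := chsh t.
have hgg : mink g g = -1.
  rewrite /g /geod !(minkDl, minkDr, minkZl, minkZr) hpp hvv hpv hvp.
  move: hc; set C := hcosh t; set S := hsinh t => hc; nra.
have huu : mink u u = 1.
  rewrite /u /geod_vel !(minkDl, minkDr, minkZl, minkZr) hpp hvv hpv hvp.
  move: hc; set C := hcosh t; set S := hsinh t => hc; nra.
have hgu : mink g u = 0.
  rewrite /u /g /geod_vel /geod !(minkDl, minkDr, minkZl, minkZr) hpp hvv hpv hvp.
  ring.
have hw := horth (mink e e *: u - mink e u *: e).
rewrite !minkBl !minkZl (minkC u g) hgu (minkC e g) hge (minkC u e) huu in hw.
set c := mink e u in hw.
have hec : mink e e = c * c.
  have : mink e e * 1 - c * c = 0 by apply: hw; ring.
  lra.
set f := e - c *: u.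
have hff : mink f f = 0.
  rewrite /f !(minkBl, minkBr, minkZl, minkZr) hec huu (minkC u e) -/c; ring.
have hfg : mink f g = 0.
  rewrite /f !(minkBl, minkZl) (minkC e g) hge (minkC u g) hgu; ring.
have ef : e - c *: u = f by [].
clearbody f; clearbody g.
set f0 := f ord0 0; set g0 := g ord0 0.
set h := g0 *: f - f0 *: g.
have h0 : h ord0 0 = 0 by rewrite /h /f0 /g0 !mxE; ring.
have hhh : mink h h = - f0 ^+ 2.
  rewrite /h !(minkBl, minkBr, minkZl, minkZr) hff hfg (minkC g f) hfg hgg; ring.
have [H1 H2] := mink_h0 h0.
have f00 : f0 = 0.
  have : f0 ^+ 2 = 0 by have := sqr_ge0 f0; rewrite hhh in H1; lra.
  by move/eqP; rewrite sqrf_eq0 => /eqP.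
have hh0 : h = 0 by apply: H2; rewrite hhh f00; ring.
have g0n : g0 != 0.
  apply/eqP => g00; have [] := @mink_h0 _ _ g g00.
  by rewrite hgg => + _; lra.
have f0v : f = 0.
  move: hh0; rewrite /h f00 scale0r subr0 => /eqP; rewrite scaler_eq0 (negPf g0n) /=.
  by move/eqP.
have he : e = c *: u by apply/subr0_eq; rewrite ef.
have cn : c != 0 by apply/eqP => c0; move: hee; rewrite hec c0; lra.
apply/matrixP => i j; rewrite /refl /Rf /Mx !mxE hec he /u /geod_vel !mxE.
genif; field; exact: cn.
Qed.
Lemma T_close : exists2 K : R, 0 < K & forall x i j,
  `|Tm x i j - (1%:M : 'M[R]_(n.+1)) i j| <= K * (`|1 - hcosh x| + `|hsinh x|).
Proof.
set Kp := \sum_(l < n.+1) (`|p l 0| + `|v l 0|).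
have bpv l : `|p l 0| <= Kp /\ `|v l 0| <= Kp.
  rewrite /Kp (bigD1 l) //=.
  have : 0 <= \sum_(i < n.+1 | i != l) (`|p i 0| + `|v i 0|).
    by apply: sumr_ge0 => i _; exact: addr_ge0.
  have := normr_ge0 (p l 0); have := normr_ge0 (v l 0).
  move=> *; split; lra.
have Kp0 : 0 <= Kp by have := normr_ge0 (p ord0 0); have := bpv ord0; lra.
exists (2 * Kp ^+ 2 + 1); first by have := sqr_ge0 Kp; lra.
move=> x i j.
have hs (y : 'cV[R]_(n.+1)) l : (forall l, `|y l 0| <= Kp) -> `|(if j == ord0 then -1 else 1) * y l 0| <= Kp.
  move=> hy; rewrite normrM.
  have -> : `|(if j == ord0 then -1 else 1 : R)| = 1 by case: (j == ord0); rewrite ?normrN normr1.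
  by rewrite mul1r.
have hp l : `|p l 0| <= Kp by case: (bpv l).
have hv l : `|v l 0| <= Kp by case: (bpv l).
rewrite /Tm /Mx [in X in `|X|]mxE addrAC subrr add0r mxE.
rewrite (_ : hcosh x - 1 = - (1 - hcosh x)); last by ring.
by apply: tri4 => //; apply: hs.
Qed.
End Geo.

End Aux.
Import Aux.

Lemma invmx_eq (R : comUnitRingType) m (A B : 'M[R]_m) : A *m B = 1%:M -> invmx A = B.
Proof.
move=> H; have [uA _] := mulmx1_unit H.
by rewrite -[invmx A]mulmx1 -H mulmxA mulVmx // mul1mx.
Qed.

Theorem mainTheorem8 (R : realType) (n k : nat) (e : 'I_k -> 'cV[R]_(n.+1)) :
  (3 <= k)%N ->
  (forall i, 0 < mink (e i) (e i)) ->
  (forall i j, i != j -> ultra_parallel (e i) (e j)) ->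
  (exists p v : 'cV[R]_(n.+1),
      geodesic_data p v /\ forall i, meets_orthogonally p v (e i)) ->
  discrete_set (generated (fun g => exists i, g = refl (e i))) ->
  iso_to_Dinf (generated (fun g => exists i, g = refl (e i))).
Proof.
move=> hk hpos hup [p [v [[[hpp _] [hvv hpv]] hmeet]]] hdisc.
set D := generated _ in hdisc *.
have [t ht] := choice hmeet.
have hR i : refl (e i) = Rf p v (t i).
  have [[_ hg] horth] := ht i.
  exact: (@key_refl R n p v hpp hvv hpv (e i) (t i) (hpos i) hg horth).
pose T := Tm p v.
have TD' a b : T a *m T b = T (a + b) by exact: (@TD R n p v hpp hvv hpv a b).
have T0' : T 0 = 1%:M by exact: (@T0 R n p v).
have Tinj a b : T a = T b -> a = b by exact: (@T_inj R n p v hpp hvv hpv a b).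
have k0 : (0 < k)%N by apply: leq_trans hk.
have k1 : (1 < k)%N by apply: leq_trans hk.
pose i0 := Ordinal k0; pose i1 := Ordinal k1.
pose rho := Rf p v (t i0).
pose a0 := t i0 + t i0.
have rhoE : rho = T a0 *m Rf p v 0 by exact: (@Rf_T R n p v hpp hvv hpv (t i0)).
have rhoT y : rho *m T y = T (- y) *m rho.
  rewrite rhoE -mulmxA (@RT R n p v hpp hvv hpv) mulmxA TD' mulmxA TD' addrC //.
have rhorho : rho *m rho = 1%:M.
  rewrite {2}rhoE mulmxA rhoT rhoE !mulmxA TD' -mulmxA (@RR R n p v hpp hvv hpv) mulmx1 addNr //.
have Rfi i : refl (e i) = T (t i + t i - a0) *m rho.
  rewrite hR (@Rf_T R n p v hpp hvv hpv) rhoE mulmxA TD' subrK //.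
have rhoD : D rho by apply: gen_in; exists i0; rewrite hR.
have rho_notT z : rho <> T z.
  move=> h; apply: (@R0_notT R n p v hpp hvv hpv (z - a0)).
  have -> : Rf p v 0 = T (- a0) *m rho by rewrite rhoE mulmxA TD' addNr T0' mul1mx.
  by rewrite h TD' addrC.
have Tinv a : invmx (T a) = T (- a) by apply: invmx_eq; rewrite TD' subrr.
pose L := fun x => D (T x).
have L0 : L 0 by rewrite /L T0'; exact: gen_one.
have LD x y : L x -> L y -> L (x + y) by move=> hx hy; rewrite /L -TD'; exact: gen_mul.
have LN x : L x -> L (- x) by move=> hx; rewrite /L -Tinv; exact: gen_inv.
have [eps eps0 heps] := hdisc 1%:M (gen_one _).
have [K K0 hK] := @T_close R n p v.
pose del := Order.min (1/2 : R) (eps / (4 * K)).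
have del0 : 0 < del.
  rewrite /del lt_min; apply/andP; split; first lra.
  by apply: divr_gt0 => //; lra.
have Ldisc x : L x -> `|x| < del -> x = 0.
  move=> Lx hx; apply: Tinj; rewrite T0'; apply: heps => // i j.
  have [h1 h2] : `|x| < 1/2 /\ `|x| < eps / (4 * K) by move: hx; rewrite lt_min => /andP.
  have [c1 c2] := hyp_small (ltW h1).
  apply: le_lt_trans (hK x i j) _.
  have : K * (`|1 - hcosh x| + `|hsinh x|) <= K * (4 * `|x|) by rewrite ler_wpM2l ?(ltW K0) //; lra.
  rewrite ltr_pdivlMr in h2; last lra.
  lra.
have t10 : t i1 != t i0.
  apply/eqP => E; have [hu _] := hup i1 i0 isT.
  apply: (hu (geod p v (t i0))); split; [rewrite -E; exact: (ht i1).1 | exact: (ht i0).1].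
pose d0 := t i1 + t i1 - a0.
have Ld0 : L d0.
  have : D (refl (e i1) *m refl (e i0)) by apply: gen_mul; apply: gen_in; [exists i1 | exists i0].
  rewrite !Rfi /a0 subrr T0' mul1mx -mulmxA rhorho mulmx1 //.
have d00 : d0 != 0.
  move/eqP: t10 => t10; apply/eqP => h; apply: t10; move: h; rewrite /d0 /a0; lra.
pose S := fun x => L x /\ 0 < x.
have S0 : S `|d0|.
  split; last by rewrite normr_gt0.
  case: (ltrP 0 d0) => hd; [rewrite gtr0_norm // | rewrite ler0_norm //; exact: LN].
have hinf : has_inf S.
  split; first by exists `|d0|.
  by exists 0 => y [_ hy]; exact: ltW.
have [lam Slam hlam] := inf_adherent del0 hinf.
have lam_min y : S y -> lam <= y.
  move=> Sy; rewrite leNgt; apply/negP => ylt.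
  have iy : inf S <= y := ge_inf hinf.2 Sy.
  have L' : L (lam - y) by apply: LD; [exact: Slam.1 | exact: LN Sy.1].
  have := Ldisc _ L'; rewrite gtr0_norm ?subr_gt0 //.
  move=> /(_ ltac:(lra)); lra.
have lam0 : 0 < lam := Slam.2.
have Lint m : L (m%:~R * lam).
  have Lnat k' : L (k'%:R * lam).
    elim: k' => [|k' IH]; first by rewrite mulr0n mul0r.
    by rewrite mulrSr mulrDl mul1r; exact: LD IH Slam.1.
  case: m => k'; first exact: Lnat.
  by rewrite NegzE intrN mulNr; apply: LN; exact: Lnat.
have Lgen z : L z -> exists m : int, z = m%:~R * lam.
  move=> Lz; exists (Num.floor (z / lam)).
  set m := Num.floor (z / lam).
  have /andP [f1 f2] := floor_itv (z / lam).
  rewrite -/m intrD in f2.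
  have r1 : m%:~R * lam <= z by rewrite -ler_pdivlMr.
  have r2 : z < (m%:~R + 1) * lam by rewrite -ltr_pdivrMr.
  have Lr : L (z - m%:~R * lam) by apply: LD Lz (LN _ (Lint m)).
  case: (ltrP 0 (z - m%:~R * lam)) => rpos.
    have := lam_min _ (conj Lr rpos); lra.
  lra.
have lamn : lam != 0 by rewrite gt_eqF.
have eqm (m m' : int) : m%:~R * lam = m'%:~R * lam -> m = m'.
  by move/(mulIf lamn)/intr_inj.
pose phi := fun x : int * bool => T (x.1%:~R * lam) *m (if x.2 then rho else 1%:M).
exists phi; split; [|split].
- move=> [m s] [m' s']; rewrite /phi /=.
  case: s; case: s' => /= H.
  + have := congr1 (fun X => X *m rho) H; rewrite /= -!mulmxA rhorho !mulmx1.
    by move/Tinj/eqm ->.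
  + exfalso; rewrite mulmx1 in H; apply: (rho_notT (- (m%:~R * lam) + m'%:~R * lam)).
    by rewrite -TD' -H mulmxA TD' addNr T0' mul1mx.
  + exfalso; rewrite mulmx1 in H; apply: (rho_notT (- (m'%:~R * lam) + m%:~R * lam)).
    by rewrite -TD' H mulmxA TD' addNr T0' mul1mx.
  + by rewrite !mulmx1 in H; move/Tinj/eqm: H ->.
- move=> g; split.
  + move=> Dg.
    have : exists y, g = T y \/ g = T y *m rho.
      move: (Dg); rewrite /D.
      elim => [|g0 [i ->]|g1 g2 _ [a [->|->]] _ [b [->|->]]|g1 _ [a [->|->]]].
      * by exists 0; left; rewrite T0'.
      * by exists (t i + t i - a0); right; rewrite Rfi.
      * by exists (a + b); left; rewrite TD'.
      * by exists (a + b); right; rewrite mulmxA TD'.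
      * by exists (a - b); right; rewrite -mulmxA rhoT mulmxA TD'.
      * by exists (a - b); left; rewrite -mulmxA (mulmxA rho) rhoT -mulmxA rhorho mulmx1 TD'.
      * by exists (- a); left; rewrite Tinv.
      * exists a; right; apply: invmx_eq.
        by rewrite -mulmxA (mulmxA rho) rhoT -mulmxA rhorho mulmx1 TD' subrr T0'.
    case=> y [Eg|Eg].
    * have Ly : L y by rewrite /L -Eg.
      have [m Em] := Lgen y Ly.
      by exists (m, false); rewrite /phi /= mulmx1 Eg Em.
    * have Ly : L y.
        rewrite /L (_ : T y = g *m rho); first exact: gen_mul Dg rhoD.
        by rewrite Eg -mulmxA rhorho mulmx1.
      have [m Em] := Lgen y Ly.
      by exists (m, true); rewrite /phi /= Eg Em.
  + case=> [[m s] <-]; rewrite /phi /=; apply: gen_mul; first exact: Lint.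
    by case: s; [exact: rhoD | exact: gen_one].
- have h1 a b : T a *m rho *m (T b *m rho) = T (a + - b) *m 1%:M.
    by rewrite -mulmxA (mulmxA rho) rhoT -mulmxA rhorho !mulmx1 TD'.
  have h2 a b : T a *m rho *m (T b *m 1%:M) = T (a + - b) *m rho.
    by rewrite mulmx1 -mulmxA rhoT mulmxA TD'.
  have h3 a b : T a *m 1%:M *m (T b *m rho) = T (a + b) *m rho.
    by rewrite mulmx1 mulmxA TD'.
  have h4 a b : T a *m 1%:M *m (T b *m 1%:M) = T (a + b) *m 1%:M.
    by rewrite !mulmx1 TD'.
  move=> [m s] [m' s']; rewrite /phi /dinf_mul /=.
  by case: s; case: s'; rewrite /= ?(intrD, intrN, mulrDl, mulNr) ?h1 ?h2 ?h3 ?h4.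
Qed.
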